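(* There exist absolute constants $c, C > 0$ and $m_0$ such that the following holds for every integer $m \geq m_0$. Let $s = \lceil \log_2 m \rceil + 2$, $k = m^2 s$, $n = km$, and let $\mathcal{F} \subset \mathcal{P}([n])$ be constructed as follows: partition $[n]$ into blocks $B_1,\ldots,B_m$ with $|B_i| = k$, choose $T_i \subset B_i$ with $|T_i| = s$, put $T = \bigcup_i T_i$, and let $\mathcal{F}$ be the union-closed family generated by $\{B_i \cup \{t\} : i \in [m],\ t \in T\}$. Let $\mathcal{F}' = \mathcal{F} \cup \{[n]\setminus\{j\} : j \in [n]\}$. Then $\mathcal{F}'$ is union-closed, $\mathcal{F}'$ separates the points of $[n]$, and $$c\,\frac{\log_2\log_2|\mathcal{F}'|}{\log_2|\mathcal{F}'|} \leq \mathrm{AOD}(\mathcal{F}') \leq C\,\frac{\log_2\log_2|\mathcal{F}'|}{\log_2|\mathcal{F}'|}.$$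
   Context: $[n] = \{1,\ldots,n\}$. A family of sets is union-closed if it contains the union of any two of its members; the union-closed family generated by $\mathcal{G}$ is the smallest union-closed family containing $\mathcal{G}$. A family $\mathcal{F} \subset \mathcal{P}([n])$ separates the points of $[n]$ if for all $i \neq j$ in $[n]$ there is $A \in \mathcal{F}$ with $|A \cap \{i,j\}| = 1$. For a finite nonempty family $\mathcal{F} \subset \mathcal{P}(X)$ and $x \in X$, the abundance is $\gamma_x = |\{A \in \mathcal{F} : x \in A\}|/|\mathcal{F}|$. For $\mathcal{F} \neq \emptyset,\{\emptyset\}$, the average overlap density is $\mathrm{AOD}(\mathcal{F}) = \frac{1}{|\mathcal{F}\setminus\{\emptyset\}|}\sum_{A \in \mathcal{F}\setminus\{\emptyset\}} \frac{1}{|A|}\sum_{x \in A}\gamma_x$. *)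

(* Defs.v *)
From HB Require Import structures.
From mathcomp Require Import all_boot all_order all_algebra.
From mathcomp Require Import all_classical all_reals all_analysis.
Set Implicit Arguments. Unset Strict Implicit. Unset Printing Implicit Defensive.
Import Order.TTheory GRing.Theory Num.Theory.
Local Open Scope ring_scope.

Definition union_closed (T : finType) (F : {set {set T}}) : bool :=
  [forall A in F, forall B in F, (A :|: B) \in F].

Definition uc_gen (T : finType) (G : {set {set T}}) : {set {set T}} :=
  \bigcap_(H : {set {set T}} | union_closed H && (G \subset H)) H.

Definition separates (T : finType) (F : {set {set T}}) : Prop :=
  forall i j : T, i != j -> exists2 A, A \in F & #|A :&: [set i; j]| = 1%N.

Definition abundance (R : realFieldType) (T : finType) (F : {set {set T}}) (x : T) : R :=
  (#|[set A in F | x \in A]|%:R) / (#|F|%:R).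

Definition AOD (R : realFieldType) (T : finType) (F : {set {set T}}) : R :=
  (#|F :\ (finset.set0 : {set T})|%:R)^-1 *
  \sum_(A in F :\ (finset.set0 : {set T})) ((#|A|%:R)^-1 * \sum_(x in A) abundance R F x).

Definition log2 (R : realType) (x : R) : R := ln x / ln 2.

(* Main.v *)
Require Import Defs.
From HB Require Import structures.
From mathcomp Require Import all_boot all_order all_algebra.
From mathcomp Require Import all_classical all_reals all_analysis.
From mathcomp Require Import zify.
From mathcomp.algebra_tactics Require Import ring lra.
Set Implicit Arguments. Unset Strict Implicit. Unset Printing Implicit Defensive.
Import Order.TTheory GRing.Theory Num.Theory.
Import ssrbool eqtype fintype finset bigop finfun.

Lemma ucP (T : finType) (F : {set {set T}}) :
  reflect (forall A B, A \in F -> B \in F -> A :|: B \in F) (union_closed F).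
Proof.
apply: (iffP forallP) => [H A B hA hB | H A].
  by have /forall_inP := implyP (H A) hA; apply.
by apply/implyP => hA; apply/forall_inP => B hB; apply: H.
Qed.

Lemma uc_gen_closed (T : finType) (G : {set {set T}}) : union_closed (uc_gen G).
Proof.
apply/ucP => A B /bigcapP hA /bigcapP hB; apply/bigcapP => H hH.
have /andP[/ucP uH _] := hH; exact: uH (hA _ hH) (hB _ hH).
Qed.

Lemma uc_gen_min (T : finType) (G H : {set {set T}}) :
  union_closed H -> G \subset H -> uc_gen G \subset H.
Proof. by move=> uH sGH; apply: finset.bigcap_inf; apply/andP. Qed.

Lemma uc_gen_sub (T : finType) (G : {set {set T}}) : G \subset uc_gen G.
Proof. by apply/subsetP => A hA; apply/bigcapP => H /andP[_ /subsetP]; apply. Qed.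

Lemma uc_bigcup (T : finType) (I : eqType) (H : {set {set T}}) (r : seq I) (f : I -> {set T}) a :
  union_closed H -> a \in H -> (forall i, i \in r -> f i \in H) -> a :|: \bigcup_(i <- r) f i \in H.
Proof.
move=> /ucP uH ha; elim: r => [|i r IH] hf; first by rewrite big_nil finset.setU0.
rewrite big_cons finset.setUCA; apply: uH; first by apply: hf; rewrite finset.inE eqxx.
by apply: IH => j jr; apply: hf; rewrite finset.inE jr orbT.
Qed.

Lemma card_bigcup_disj (I : finType) (X : finType) (r : seq I) (f : I -> {set X}) :
  uniq r -> (forall i j, i \in r -> j \in r -> i != j -> [disjoint f i & f j]) ->
  #|\bigcup_(i <- r) f i| = \sum_(i <- r) #|f i|.
Proof.
elim: r => [|i r IH]; first by rewrite !big_nil cards0.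
move=> /= /andP[ir ur] hd; rewrite !big_cons cardsU.
rewrite IH //; last by move=> a b ha hb; apply: hd; rewrite finset.inE ?ha ?hb orbT.
suff -> : f i :&: \bigcup_(j <- r) f j = finset.set0 by rewrite cards0 subn0.
apply/setP => x; rewrite !finset.inE finset.bigcup_seq; apply/negP => /andP[xi /bigcupP[j jr xj]].
have := hd i j; rewrite !finset.inE eqxx jr orbT => /(_ erefl erefl).
have -> : i != j by apply: contraNneq ir => ->.
by move=> /(_ erefl) /disjointFr /(_ xi); rewrite xj.
Qed.

Section Constr.
Variables (X : finType) (m k s : nat) (B T : 'I_m -> {set X}).
Hypothesis HB : forall i, #|B i| = k.
Hypothesis Hdisj : forall i j, i != j -> [disjoint B i & B j].
Hypothesis Hcov : \bigcup_i B i = [set: X].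
Hypothesis HTB : forall i, T i \subset B i.
Hypothesis HT : forall i, #|T i| = s.
Hypothesis Hs : 0 < s.
Hypothesis Hsk : s < k.

Let Tall := \bigcup_i T i.
Let G := [set B i :|: [set t] | i in [set: 'I_m], t in Tall].
Let F := uc_gen G.

Lemma blk x : exists i, x \in B i.
Proof.
have : x \in \bigcup_i B i by rewrite Hcov finset.inE.
by case/bigcupP => i _ xi; exists i.
Qed.

Lemma inB_eq i j x : x \in B i -> x \in B j -> i = j.
Proof.
move=> xi xj; apply/eqP; apply/negPn/negP => /Hdisj /disjointFr /(_ xi).
by rewrite xj.
Qed.

Lemma TallB x j : x \in Tall -> x \in B j -> x \in T j.
Proof.
case/bigcupP => i _ xTi xj.
by have := inB_eq (subsetP (HTB i) _ xTi) xj => <-.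
Qed.

Lemma T_nonempty j : exists t, t \in T j.
Proof.
have : 0 < #|T j| by rewrite HT.
by case/card_gt0P => t; exists t.
Qed.

Definition Pb (A : {set X}) : bool :=
  [exists i, B i \subset A] && [forall j, (B j \subset A) || (A :&: B j \subset T j)].
Definition Pfam := [set A | Pb A].

Lemma Pfam_closed : union_closed Pfam.
Proof.
apply/ucP => A A'; rewrite !finset.inE => /andP[/existsP[i hi] /forallP hA] /andP[_ /forallP hA'].
apply/andP; split; first by apply/existsP; exists i; apply: subset_trans hi (finset.subsetUl _ _).
apply/forallP => j; case/orP: (hA j) => [h|h].
  by rewrite (subset_trans h (finset.subsetUl _ _)).
case/orP: (hA' j) => [h'|h']; first by rewrite (subset_trans h' (finset.subsetUr _ _)).
by rewrite finset.setIUl finset.subUset h h' orbT.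
Qed.

Lemma G_Pfam : G \subset Pfam.
Proof.
apply/subsetP => A /imset2P[i t _ tT ->]; rewrite finset.inE; apply/andP; split.
  by apply/existsP; exists i; apply: finset.subsetUl.
apply/forallP => j; case: (eqVneq i j) => [->|ij]; first by rewrite finset.subsetUl.
apply/orP; right; apply/subsetP => x; rewrite !finset.inE => /andP[/orP[xi|/eqP ->] xj].
  by have := inB_eq xi xj => eij; rewrite eij eqxx in ij.
exact: TallB.
Qed.

Lemma F_Pfam : F \subset Pfam.
Proof. exact: uc_gen_min Pfam_closed G_Pfam. Qed.

Lemma P_block A x j : A \in Pfam -> x \in A -> x \notin Tall -> x \in B j -> B j \subset A.
Proof.
rewrite finset.inE => /andP[_ /forallP /(_ j) /orP[//|/subsetP h]] xA xT xj.
have := h x; rewrite finset.inE xA xj => /(_ erefl) xTj.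
by case/negP: xT; apply/bigcupP; exists j.
Qed.

Lemma F_closed : union_closed F.
Proof. exact: uc_gen_closed. Qed.

Lemma G_F A : A \in G -> A \in F.
Proof. exact: (subsetP (uc_gen_sub G)). Qed.

Lemma BS_F j (S : {set X}) : S \subset Tall -> B j :|: S \in F.
Proof.
move=> sS; have [t0 t0T] := T_nonempty j.
have ht0 : t0 \in Tall by apply/bigcupP; exists j.
have -> : B j :|: S = (B j :|: [set t0]) :|: \bigcup_(t <- enum S) (B j :|: [set t]).
  apply/setP => x; rewrite !finset.inE finset.bigcup_seq.
  apply/idP/idP.
    case/orP => [->//|xS]; apply/orP; right; apply/bigcupP; exists x.
      by rewrite mem_enum. by rewrite !finset.inE eqxx orbT.
  case/orP => [/orP[->//|/eqP ->]|/bigcupP[t tS]].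
    by rewrite (subsetP (HTB j)).
  rewrite !finset.inE => /orP[->//|/eqP ->]; rewrite ?mem_enum in tS; by rewrite tS orbT.
apply: uc_bigcup F_closed _ _.
  by apply: G_F; apply/imset2P; exists j t0; rewrite ?finset.inE.
move=> t; rewrite mem_enum => tS.
by apply: G_F; apply/imset2P; exists j t; rewrite ?finset.inE // (subsetP sS).
Qed.

Lemma B_F j : B j \in F.
Proof. by have := BS_F j (finset.sub0set Tall); rewrite finset.setU0. Qed.

Lemma setT_F (i0 : 'I_m) : [set: X] \in F.
Proof.
have := uc_bigcup (r := index_enum 'I_m) (f := B) F_closed (B_F i0) (fun i _ => B_F i).
by rewrite Hcov finset.setUT.
Qed.

Lemma card_Tall : #|Tall| = m * s.
Proof.
rewrite /Tall card_bigcup_disj ?index_enum_uniq //.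
  by rewrite (eq_bigr (fun=> s)) // sum_nat_const card_ord.
move=> i j _ _ /Hdisj h; apply: disjointWl (HTB i) _; apply: disjointWr (HTB j) _; exact: h.
Qed.

Definition Lj j := [set B j :|: S | S in powerset (Tall :\: T j)].

Lemma TjTall j : T j \subset Tall.
Proof. exact: (finset.bigcup_sup j). Qed.

Lemma card_Lj j : #|Lj j| = 2 ^ (s * m.-1).
Proof.
rewrite card_in_imset ?card_powerset.
  rewrite cardsD (finset.setIidPr (TjTall j)) card_Tall HT.
  by rewrite mulnC -[X in _ - X]muln1 -mulnBr subn1.
move=> S S'; rewrite !finset.inE => sS sS' e.
have key (U : {set X}) : U \subset Tall :\: T j -> (B j :|: U) :\: B j = U.
  move=> sU; apply/setP => x; rewrite !finset.inE; case: (boolP (x \in U)) => xU; last by rewrite orbF andNb.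
  have /setDP[xT xTj] := subsetP sU x xU.
  by rewrite orbT andbT; apply/negP => xB; case/negP: xTj; apply: TallB.
by rewrite -(key _ sS) -(key _ sS') e.
Qed.

Lemma Lj_F j : Lj j \subset F.
Proof.
apply/subsetP => A /imsetP[S]; rewrite finset.inE => sS ->; apply: BS_F.
exact: subset_trans sS (subsetDl _ _).
Qed.

Lemma Lj_block j A : A \in Lj j -> forall i, B i \subset A -> i = j.
Proof.
case/imsetP => S; rewrite finset.inE => sS -> i sB; apply/eqP; apply/negPn/negP => ij.
have : B i \subset T i.
  apply/subsetP => x xi; have := subsetP sB x xi; rewrite finset.inE => /orP[xj|xS].
    by have := inB_eq xi xj => e; rewrite e eqxx in ij.
  by apply: TallB => //; have /setDP[] := subsetP sS x xS.
by move/subset_leq_card; rewrite HB HT leqNgt Hsk.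
Qed.

Lemma Lj_disj i j : i != j -> [disjoint Lj i & Lj j].
Proof.
move=> ij; apply/pred0P => A /=; apply/negP => /andP[Ai Aj].
have : B i \subset A.
  by case/imsetP: Ai => S _ ->; apply: finset.subsetUl.
by move/(Lj_block Aj) => e; rewrite e eqxx in ij.
Qed.

Lemma card_F_ge : m * 2 ^ (s * m.-1) <= #|F|.
Proof.
have -> : m * 2 ^ (s * m.-1) = #|\bigcup_j Lj j|.
  rewrite card_bigcup_disj ?index_enum_uniq //; last by move=> i j _ _; apply: Lj_disj.
  rewrite (eq_bigr (fun=> 2 ^ (s * m.-1))); last by move=> j _; rewrite card_Lj.
  by rewrite sum_nat_const card_ord.
apply: subset_leq_card; apply/bigcupsP => j _; exact: Lj_F.
Qed.

Lemma Lj_x j x : x \in B j -> Lj j \subset [set A in F | x \in A].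
Proof.
move=> xj; apply/subsetP => A AL; rewrite finset.inE (subsetP (Lj_F j)) //=.
by case/imsetP: AL => S _ ->; rewrite finset.inE xj.
Qed.

Definition famC (C : {set 'I_m}) j : {set {set X}} :=
  if j \in C then [set B j] else B j |: powerset (T j).

Lemma card_upper (C : {set 'I_m}) :
  #|[set A in F | [forall j in C, B j \subset A]]| <= (2 ^ s).+1 ^ #|~: C|.
Proof.
set S := [set A in F | _].
pose phi (A : {set X}) : {ffun 'I_m -> {set X}} := [ffun j => A :&: B j].
have inj : {in S &, injective phi}.
  move=> A A' _ _ e; apply/setP => x; have [j xj] := blk x.
  have := congr1 (fun f : {ffun 'I_m -> {set X}} => x \in f j) e; rewrite /phi !ffunE !finset.inE xj.
  by rewrite !andbT.
rewrite -(card_in_imset inj).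
have sub : phi @: S \subset family (fun j => famC C j).
  apply/subsetP => f /imsetP[A]; rewrite finset.inE => /andP[AF /forall_inP hC] ->.
  apply/familyP => j; rewrite /phi ffunE /famC.
  have := subsetP F_Pfam A AF; rewrite finset.inE => /andP[_ /forallP /(_ j)].
  case: (boolP (j \in C)) => jC.
    by rewrite finset.inE (finset.setIidPr (hC j jC)).
  case/orP => [h|h]; first by rewrite (finset.setIidPr h) !finset.inE eqxx.
  by rewrite !finset.inE h orbT.
apply: leq_trans (subset_leq_card sub) _.
rewrite card_family foldrE big_map big_enum /=.
apply: leq_trans (leq_prod (E2 := fun j => if j \in C then 1 else (2 ^ s).+1) _) _.
  move=> j _; rewrite /famC; case: (j \in C); first by rewrite cards1.
  by rewrite cardsU1 card_powerset HT; case: (_ \notin _); rewrite ?add1n ?add0n ?leqnSn.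
rewrite -prod_nat_const [in X in _ <= X]big_mkcond /=.
by apply/eq_leq; apply: eq_bigr => j _; rewrite finset.inE; case: (j \in C).
Qed.


Hypothesis Hm2 : 1 < m.
Hypothesis Hk2 : m * (m * s) <= k.
Hypothesis HX : #|X| = k * m.

Let coF := [set [set: X] :\ j | j : X].
Let F' := F :|: coF.

Lemma i0 : 'I_m.
Proof. exact: (Ordinal (ltnW Hm2)). Qed.

Lemma setU_cos (A : {set X}) j :
  A :|: ([set: X] :\ j) = if j \in A then [set: X] else [set: X] :\ j.
Proof.
apply/setP => x; case: (boolP (j \in A)) => jA; rewrite !finset.inE ?andbT.
  by case: (eqVneq x j) => [->|]; rewrite ?jA ?orbT.
case: (eqVneq x j) => [->|] /=; last by rewrite orbT.
by rewrite orbF; apply/negbTE.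
Qed.

Lemma F'_closed : union_closed F'.
Proof.
have hT : [set: X] \in F' by rewrite /F' finset.inE (setT_F i0).
have hc j : [set: X] :\ j \in F' by apply/setUP; right; apply/imsetP; exists j.
apply/ucP => A A' /setUP[AF|/imsetP[j _ ->]] /setUP[A'F|/imsetP[j' _ ->]].
- by apply/setUP; left; exact: (ucP _ F_closed _ _ AF A'F).
- by rewrite setU_cos; case: (j' \in A); [exact: hT|apply: hc].
- by rewrite finset.setUC setU_cos; case: (j \in A'); [exact: hT|apply: hc].
- by rewrite setU_cos; case: (j' \in _); [exact: hT|apply: hc].
Qed.

Lemma F'_sep i j : i != j -> exists2 A, A \in F' & #|A :&: [set i; j]| = 1.
Proof.
move=> ij; exists ([set: X] :\ i); first by apply/setUP; right; apply/imsetP; exists i.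
have -> : ([set: X] :\ i) :&: [set i; j] = [set j].
  apply/setP => x; rewrite !finset.inE; case: (eqVneq x j) => [->|xj].
    by rewrite andbT orbT andbT eq_sym.
  by rewrite orbF andbT andNb.
by rewrite cards1.
Qed.

Lemma card_cos j : #|[set: X] :\ j| = (k * m).-1.
Proof. by rewrite -HX -cardsT (cardsD1 j [set: X]) finset.inE. Qed.

Lemma F'_size A : A \in F' -> m * #|A :&: Tall| <= #|A|.
Proof.
move=> AF; have h1 : m * #|A :&: Tall| <= k.
  apply: leq_trans Hk2; rewrite leq_mul2l -card_Tall; apply/orP; right.
  exact/subset_leq_card/subsetIr.
apply: leq_trans h1 _; move: AF; rewrite finset.inE => /orP[AF|/imsetP[j _ ->]].
  have := subsetP F_Pfam A AF; rewrite finset.inE => /andP[/existsP[i /subset_leq_card]] + _.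
  by rewrite HB.
rewrite card_cos; have := Hm2; nia.
Qed.

Lemma F'_nonempty A : A \in F' -> A != finset.set0.
Proof.
move=> AF; apply/negP => /eqP A0.
have : 0 < #|A|.
  move: AF; rewrite finset.inE => /orP[AF|/imsetP[j _ ->]].
    have := subsetP F_Pfam A AF; rewrite finset.inE => /andP[/existsP[i /subset_leq_card]] + _.
    by rewrite HB => h; apply: leq_trans h; apply: leq_ltn_trans Hsk.
  rewrite card_cos; have := Hm2; have := Hsk; nia.
by rewrite A0 cards0.
Qed.

Lemma card_F'_ge : m * 2 ^ (s * m.-1) <= #|F'|.
Proof. exact: leq_trans card_F_ge (subset_leq_card (finset.subsetUl _ _)). Qed.

Lemma card_F'_le : #|F'| <= (2 ^ s).+1 ^ m + k * m.
Proof.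
apply: leq_trans (leq_card_setU _ _) _; apply: leq_add.
  have := card_upper finset.set0; rewrite finset.setC0 cardsT card_ord; apply: leq_trans.
  apply/subset_leq_card/subsetP => A AF; rewrite finset.inE AF /=.
  by apply/forall_inP => j; rewrite finset.inE.
by rewrite -HX; apply: leq_imset_card.
Qed.

Lemma cnt_ge x j : x \in B j -> 2 ^ (s * m.-1) <= #|[set A in F' | x \in A]|.
Proof.
move=> xj; rewrite -(card_Lj j); apply: subset_leq_card.
apply: subset_trans (Lj_x xj) _; apply/subsetP => A; rewrite !finset.inE => /andP[-> ->].
by rewrite orTb.
Qed.

Lemma cnt_le x j : x \in B j -> x \notin Tall ->
  #|[set A in F' | x \in A]| <= (2 ^ s).+1 ^ m.-1 + k * m.
Proof.
move=> xj xT.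
have sub : [set A in F' | x \in A] \subset
   [set A in F | [forall i in [set j], B i \subset A]] :|: coF.
  apply/subsetP => A; rewrite !finset.inE => /andP[/orP[AF|Ac] xA]; last by rewrite Ac orbT.
  rewrite AF /=; apply/orP; left; apply/forall_inP => i; rewrite finset.inE => /eqP ->.
  exact: P_block (subsetP F_Pfam A AF) xA xT xj.
apply: leq_trans (subset_leq_card sub) _.
apply: leq_trans (leq_card_setU _ _) _; apply: leq_add.
  by have := card_upper [set j]; rewrite cardsC1 card_ord.
by rewrite -HX; apply: leq_imset_card.
Qed.

Lemma summary :
  [/\ union_closed F', separates F',
     (forall A, A \in F' -> A != finset.set0 /\ (m * #|A :&: Tall| <= #|A|)%N),
     (m * 2 ^ (s * m.-1) <= #|F'|)%N /\ (#|F'| <= (2 ^ s).+1 ^ m + k * m)%N &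
     (forall x, x \notin Tall -> (2 ^ (s * m.-1) <= #|[set A in F' | x \in A]|)%N /\
         (#|[set A in F' | x \in A]| <= (2 ^ s).+1 ^ m.-1 + k * m)%N)].
Proof using All.
split.
- exact: F'_closed.
- exact: F'_sep.
- by move=> A hA; split; [apply: F'_nonempty | apply: F'_size].
- by split; [apply: card_F'_ge | apply: card_F'_le].
- move=> x xT; have [j xj] := blk x; split; [exact: cnt_ge xj | exact: cnt_le xj xT].
Qed.

End Constr.

Local Open Scope ring_scope.

Lemma abundance_ge0 (R : realFieldType) (X : finType) (F : {set {set X}}) x : 0 <= abundance R F x.
Proof. by rewrite /abundance divr_ge0 ?ler0n. Qed.

Lemma abundance_le1 (R : realFieldType) (X : finType) (F : {set {set X}}) x : abundance R F x <= 1.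
Proof.
rewrite /abundance; case: (posnP #|F|) => [->|hF]; first by rewrite invr0 mulr0.
rewrite ler_pdivrMr ?ltr0n // mul1r ler_nat; apply: subset_leq_card.
by apply/subsetP => A; rewrite finset.inE => /andP[].
Qed.

Lemma inner_bounds (R : realFieldType) (X : finType) (F : {set {set X}}) (Tl A : {set X}) (m : nat) (lo hi : R) :
  (1 < m)%N -> A != finset.set0 -> (m * #|A :&: Tl| <= #|A|)%N -> 0 <= lo -> 0 <= hi ->
  (forall x, x \notin Tl -> lo <= abundance R F x <= hi) ->
  lo / 2 <= (#|A|%:R)^-1 * \sum_(x in A) abundance R F x <= m%:R^-1 + hi.
Proof.
move=> hm hA hmt hlo hhi hx.
have ha : (0 < #|A|)%N by rewrite card_gt0.
have hta : (#|A :&: Tl| <= #|A|)%N by apply/subset_leq_card/subsetIl.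
rewrite (big_setID Tl) /=.
set S1 := \sum_(x in A :&: Tl) _; set S2 := \sum_(x in A :\: Tl) _.
have s1l : 0 <= S1 by apply: sumr_ge0 => x _; apply: abundance_ge0.
have s1u : S1 <= #|A :&: Tl|%:R.
  by rewrite /S1 -sumr_const; apply: ler_sum => x _; apply: abundance_le1.
have cD : #|A :\: Tl| = (#|A| - #|A :&: Tl|)%N by rewrite cardsD.
have s2l : (#|A|%:R - #|A :&: Tl|%:R) * lo <= S2.
  rewrite -natrB // -cD mulr_natl -sumr_const.
  by apply: ler_sum => x; rewrite finset.inE => /andP[xT _]; case/andP: (hx x xT).
have s2u : S2 <= (#|A|%:R - #|A :&: Tl|%:R) * hi.
  rewrite -natrB // -cD mulr_natl -sumr_const.
  by apply: ler_sum => x; rewrite finset.inE => /andP[xT _]; case/andP: (hx x xT).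
have hmt' : m%:R * #|A :&: Tl|%:R <= #|A|%:R :> R by rewrite -natrM ler_nat.
have hm' : 2 <= m%:R :> R by rewrite (ler_nat R 2 m).
have ha' : 0 < #|A|%:R :> R by rewrite ltr0n.
have ht' : 0 <= #|A :&: Tl|%:R :> R by rewrite ler0n.
set a := #|A|%:R in hmt' ha' s1u s2l s2u *; set t := #|A :&: Tl|%:R in hmt' ht' s1u s2l s2u *.
set M := m%:R in hmt' hm' *.
have hMt : t <= a / M by rewrite ler_pdivlMr ?(lt_le_trans _ hm') // mulrC.
have h2t : 2 * t <= a by nra.
apply/andP; split.
  rewrite [X in _ <= X]mulrC ler_pdivlMr //; nra.
rewrite [X in X <= _]mulrC ler_pdivrMr //.
have : a / M = M^-1 * a by rewrite mulrC.
nra.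
Qed.

Lemma AOD_between (R : realFieldType) (X : finType) (F : {set {set X}}) (lo hi : R) :
  (0 < #|F|)%N -> finset.set0 \notin F ->
  (forall A, A \in F -> lo <= (#|A|%:R)^-1 * \sum_(x in A) abundance R F x <= hi) ->
  lo <= AOD R F <= hi.
Proof.
move=> hF h0 hA; rewrite /AOD.
have -> : F :\ finset.set0 = F.
  by apply/setP => A; rewrite !finset.inE; case: (eqVneq A finset.set0) => // ->; rewrite (negbTE h0).
have hF' : 0 < #|F|%:R :> R by rewrite ltr0n.
apply/andP; split.
  rewrite mulrC ler_pdivlMr // mulr_natr -sumr_const.
  by apply: ler_sum => A /hA /andP[].
rewrite mulrC ler_pdivrMr // mulr_natr -sumr_const.
by apply: ler_sum => A /hA /andP[].
Qed.

Lemma nat_facts m : (8 <= m)%N ->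
  [/\ (2 ^ (up_log 2 m).-1 < m)%N, (m <= 2 ^ up_log 2 m)%N, (2 <= up_log 2 m)%N &
      (up_log 2 m <= m.-1)%N].
Proof.
move=> hm; have h1 := up_log_gtn (isT : (1 < 2)%N) (leq_trans (isT : (1 < 8)%N) hm).
have h2 := up_logP m (isT : (1 < 2)%N).
have hu : (2 <= up_log 2 m)%N.
  case: (up_log 2 m) h2 => [|[|u]] //= h2; move: h2; rewrite ?expn0 ?expn1; lia.
split => //.
have h3 := ltn_expl (up_log 2 m).-1 (isT : (1 < 2)%N).
lia.
Qed.

Lemma km_le_N m : (8 <= m)%N ->
  (m ^ 2 * (up_log 2 m + 2) * m <= 2 ^ ((up_log 2 m + 2) * m.-1))%N.
Proof.
move=> hm; case: (nat_facts hm) => h1 h2 h3 h4.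
set u := up_log 2 m in h1 h2 h3 h4 *.
rewrite expnM.
have e1 : (4 * m <= 2 ^ (u + 2))%N by rewrite expnD mulnC leq_mul2r h2 orbT.
have e2 : ((4 * m) ^ m.-1 <= (2 ^ (u + 2)) ^ m.-1)%N.
  by rewrite leq_exp2r //; lia.
have e3 : ((4 * m) ^ 4 <= (4 * m) ^ m.-1)%N by apply: leq_pexp2l; lia.
have e0 : (m ^ 2 * (u + 2) * m <= (4 * m) ^ 4)%N.
  rewrite !expnS !expn0; nia.
exact: leq_trans e0 (leq_trans e3 e2).
Qed.

Lemma pow_aux (R : realFieldType) (a : R) (r : nat) : 0 <= a ->
  (a + 1) ^+ r * (a - r%:R) <= a ^+ r.+1.
Proof.
move=> ha; elim: r => [|r IH]; first by rewrite !expr0 expr1 mul1r subr0.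
have hp : 0 <= (a + 1) ^+ r by apply: exprn_ge0; lra.
rewrite exprS [X in _ <= X]exprS -mulrA.
have e : (a + 1) * (a - r.+1%:R) <= a * (a - r%:R).
  rewrite -addn1 natrD; have : 0 <= r%:R :> R by rewrite ler0n. nra.
apply: le_trans (_ : (a + 1) ^+ r * (a * (a - r%:R)) <= _).
  by rewrite mulrCA; apply: ler_wpM2l.
by rewrite mulrCA; apply: ler_wpM2l.
Qed.

Lemma pow_bound (R : realFieldType) (a : R) (r : nat) : 0 < a -> 2 * r%:R <= a ->
  (a + 1) ^+ r <= 2 * a ^+ r.
Proof.
move=> ha hr; have := pow_aux r (ltW ha); rewrite exprS.
have hX : 0 <= (a + 1) ^+ r by apply: exprn_ge0; lra.
have hY : 0 <= a ^+ r by apply: exprn_ge0; lra.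
set X := (a + 1) ^+ r; set Y := a ^+ r => h.
have h3 : 0 <= X * (a - 2 * r%:R) by apply: mulr_ge0 => //; lra.
have h2 : a * (X - 2 * Y) <= 0 by nra.
have : X - 2 * Y <= 0.
  by move: h2; rewrite pmulr_rle0.
lra.
Qed.

Lemma log2_ge (R : realType) (x : R) (p : nat) : 0 < x -> 2 ^+ p <= x -> p%:R <= log2 x.
Proof.
move=> hx hp; have l2 : 0 < ln (2 : R) by apply: ln_gt0; lra.
rewrite /log2 ler_pdivlMr //.
have : ln (2 ^+ p) <= ln x.
  by rewrite ler_ln // posrE // exprn_gt0.
by rewrite lnXn // mulr_natl.
Qed.

Lemma log2_le (R : realType) (x : R) (p : nat) : 0 < x -> x <= 2 ^+ p -> log2 x <= p%:R.
Proof.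
move=> hx hp; have l2 : 0 < ln (2 : R) by apply: ln_gt0; lra.
rewrite /log2 ler_pdivrMr //.
have : ln x <= ln (2 ^+ p).
  by rewrite ler_ln // posrE // exprn_gt0.
by rewrite lnXn // mulr_natl.
Qed.

Lemma nat_facts2 m u : (8 <= m)%N -> (2 ^ u.-1 < m)%N -> (m <= 2 ^ u)%N -> (2 <= u)%N -> (u <= m.-1)%N ->
  [/\ (17 * m <= 32 * 2 ^ u)%N, (2 ^ u.-1 <= (u + 2) * m.-1)%N,
     ((u + 2) * m.-1 + u + 5 <= 2 ^ (2 * (u + 2)))%N,
     (2 * (u + 2) * m <= 4 * ((u + 2) * m.-1))%N &
     ((u + 2) * m.-1 + u + 5 <= 9 * m * u.-1)%N].
Proof.
move=> hm h1 h2 h3 h4; split.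
- by apply: leq_mul.
- have : (m <= (u + 2) * m.-1)%N by nia.
  lia.
- have e : (2 ^ (2 * (u + 2)) = 16 * (2 ^ u) ^ 2)%N.
    by rewrite mulnDr expnD mulnC expnM (mulnC 2 u) expnM.
  rewrite e; have : (m ^ 2 <= (2 ^ u) ^ 2)%N by rewrite leq_exp2r.
  nia.
- nia.
- nia.
Qed.

Lemma final_numeric (R : realType) (m Fc : nat) (AODv : R) :
  (8 <= m)%N ->
  (m * 2 ^ ((up_log 2 m + 2) * m.-1) <= Fc)%N ->
  (Fc <= (2 ^ (up_log 2 m + 2)).+1 ^ m + m ^ 2 * (up_log 2 m + 2) * m)%N ->
  ((2 ^ ((up_log 2 m + 2) * m.-1))%:R / Fc%:R) / 2 <= AODv ->
  AODv <= m%:R^-1 + (((2 ^ (up_log 2 m + 2)).+1 ^ m.-1 + m ^ 2 * (up_log 2 m + 2) * m)%:R / Fc%:R) ->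
  136^-1 * (log2 (log2 (Fc%:R : R)) / log2 (Fc%:R : R)) <= AODv /\
  AODv <= 36 * (log2 (log2 (Fc%:R : R)) / log2 (Fc%:R : R)).
Proof.
move=> hm hF1 hF2 hlo hhi.
have hkm := km_le_N hm.
case: (nat_facts hm) => h1 h2 h3 h4.
move: hF1 hF2 hlo hhi hkm h1 h2 h3 h4.
set u := up_log 2 m; set s := (u + 2)%N; set N := (2 ^ (s * m.-1))%N.
set KM := (m ^ 2 * s * m)%N.
move=> hF1 hF2 hlo hhi hkm h1 h2 h3 h4.
case: (nat_facts2 hm h1 h2 h3 h4) => g1 g2 g3 g4 g5.
have n_a4 : (4 * m <= 2 ^ s)%N by rewrite /s expnD mulnC leq_mul2r h2 orbT.
have n_a8 : (2 ^ s <= 8 * m)%N.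
  have : (2 ^ u = 2 * 2 ^ u.-1)%N by rewrite -expnS prednK //; lia.
  rewrite /s expnD => ->; lia.
set a : R := (2 ^ s)%:R.
have ha4 : 4 * m%:R <= a by rewrite /a -natrM ler_nat.
have ha8 : a <= 8 * m%:R by rewrite /a -natrM ler_nat.
have hM8 : 8 <= m%:R :> R by rewrite (ler_nat R 8 m).
have hNa : N%:R = a ^+ m.-1 :> R by rewrite /N expnM natrX.
have hNpos : 0 < N%:R :> R by rewrite ltr0n /N expn_gt0.
have hm1 : (m = m.-1.+1)%N by rewrite prednK //; lia.
have hP1 : ((2 ^ s).+1 ^ m)%:R <= 2 * a * N%:R :> R.
  rewrite natrX -addn1 natrD -/a hNa -mulrA -exprS -hm1.
  apply: pow_bound; first lra.
  have : (m%:R : R) <= a by lra. lra.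
have hP0 : ((2 ^ s).+1 ^ m.-1)%:R <= 2 * N%:R :> R.
  rewrite natrX -addn1 natrD -/a hNa.
  apply: pow_bound; first lra.
  have : (m.-1%:R : R) <= m%:R by rewrite ler_nat; lia.
  lra.
have hKM : KM%:R <= N%:R :> R by rewrite ler_nat.
set Fr : R := Fc%:R.
have hF1' : m%:R * N%:R <= Fr by rewrite /Fr -natrM ler_nat.
have hF2' : Fr <= 17 * m%:R * N%:R.
  apply: le_trans (_ : ((2 ^ s).+1 ^ m + KM)%:R <= _); first by rewrite /Fr ler_nat.
  rewrite natrD; nra.
have hFpos : 0 < Fr by apply: lt_le_trans hF1'; apply: mulr_gt0 => //; lra.
set iM : R := m%:R^-1.
have hiM : m%:R * iM = 1 by rewrite /iM mulfV //; lra.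
have hiMpos : 0 < iM by rewrite /iM invr_gt0; lra.
have hA1 : iM / 34 <= AODv.
  apply: le_trans hlo.
  rewrite ler_pdivlMr // ler_pdivlMr //.
  have := ler_wpM2l (ltW hiMpos) hF2'. nra.
have hA2 : AODv <= 4 * iM.
  apply: le_trans hhi _.
  suff : (((2 ^ s).+1 ^ m.-1 + KM)%:R / Fr) <= 3 * iM by rewrite -/iM -/Fr; lra.
  rewrite ler_pdivrMr // natrD.
  have := ler_wpM2l (ltW hiMpos) hF1'. nra.
set L := log2 Fr.
have hL1 : (s * m.-1)%:R <= L.
  apply: log2_ge => //; rewrite -natrX -/N.
  apply: le_trans hF1'; rewrite ler_peMl //; lra.
set e := (s * m.-1 + u + 5)%N.
have hL2 : L <= e%:R.
  apply: log2_le => //; apply: le_trans hF2' _.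
  rewrite /e -addnA exprD hNa -/a.
  have -> : a = 2 ^+ s by rewrite /a natrX.
  rewrite -exprM mulnC [X in _ <= X]mulrC ler_pM2r ?exprn_gt0 //.
  have : 17 * (m%:R : R) <= 32 * (2 ^ u)%:R.
    by rewrite -(natrM R 17) -(natrM R 32) ler_nat.
  have e32 : (2 : R) ^+ 5 = 32 by rewrite !exprS expr0; lra.
  by rewrite natrX exprD e32; lra.
have hLpos : 0 < L.
  by apply: lt_le_trans hL1; rewrite ltr0n; apply: leq_trans g2; rewrite expn_gt0.
set ll := log2 L.
have hll1 : (u.-1)%:R <= ll.
  by apply: log2_ge => //; apply: le_trans hL1; rewrite -natrX ler_nat.
have hll2 : ll <= (2 * s)%:R.
  by apply: log2_le => //; apply: le_trans hL2 _; rewrite -natrX ler_nat.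
split.
  apply: le_trans hA1.
  suff : ll / L <= 4 * iM by lra.
  rewrite ler_pdivrMr //.
  have n1 : ((2 * s) * m <= 4 * (s * m.-1))%N by [].
  have r1 : (2 * s)%:R * m%:R <= 4 * (s * m.-1)%:R :> R.
    by rewrite -natrM -(natrM R 4) ler_nat.
  have r2 : (2 * s)%:R <= 4 * iM * (s * m.-1)%:R :> R.
    have := ler_wpM2l (ltW hiMpos) r1. nra.
  have := ler_wpM2l (_ : 0 <= 4 * iM) hL1. nra.
apply: le_trans hA2 _.
suff : 4 * iM * L <= 36 * ll.
  rewrite mulrA [X in _ <= X]mulrC -ler_pdivlMr // mulrC mulrA; lra.
have n2 : (e <= 9 * m * u.-1)%N by [].
have r2 : e%:R <= 9 * m%:R * (u.-1)%:R :> R.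
  by rewrite -(natrM R 9) -natrM ler_nat.
have := ler_wpM2l (ltW hiMpos) r2.
have := ler_wpM2l (ltW hiMpos) hL2. nra.
Qed.

Theorem mainTheorem5 (R : realType) :
  exists (c C : R) (m0 : nat), 0 < c /\ 0 < C /\
  forall m : nat, (m0 <= m)%N ->
  let s := (up_log 2 m + 2)%N in
  let k := (m ^ 2 * s)%N in
  forall (B T : 'I_m -> {set 'I_(k * m)}),
    (forall i, #|B i| = k) ->
    (forall i j, i != j -> [disjoint B i & B j]) ->
    \bigcup_i B i = [set: 'I_(k * m)] ->
    (forall i, T i \subset B i) ->
    (forall i, #|T i| = s) ->
  let Tall := \bigcup_i T i in
  let F := uc_gen [set B i :|: [set t] | i in [set: 'I_m], t in Tall] in
  let F' := F :|: [set [set: 'I_(k * m)] :\ j | j : 'I_(k * m)] in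
  union_closed F' /\ separates F' /\
  c * (log2 (log2 (#|F'|%:R)) / log2 (#|F'|%:R)) <= AOD R F' /\
  AOD R F' <= C * (log2 (log2 (#|F'|%:R)) / log2 (#|F'|%:R)).
Proof.
exists 136^-1, 36, 8%N; split; first by rewrite invr_gt0.
split; first by [].
move=> m hm s k B T HB Hdisj Hcov HTB HT Tall F F'.
have Hs : (0 < s)%N by rewrite /s addn2.
have Hm2 : (1 < m)%N by apply: leq_trans hm.
have Hsk : (s < k)%N.
  rewrite /k; have : (2 <= m)%N by []; nia.
have Hk2 : (m * (m * s) <= k)%N by rewrite /k mulnA mulnn.
have HX : #|'I_(k * m)| = (k * m)%N by rewrite card_ord.
have [hcl hsep hA [hF1 hF2] hcnt] := summary HB Hdisj Hcov HTB HT Hs Hsk Hm2 Hk2 HX.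
split; first exact: hcl.
split; first exact: hsep.
have hpos : (0 < #|F'|)%N.
  have hm0 : (0 < m)%N by apply: ltnW.
  by apply: leq_trans hF1; rewrite muln_gt0 hm0 expn_gt0.
have h0 : finset.set0 \notin F'.
  by apply/negP => h; have [] := hA _ h; rewrite eqxx.
have hFr : 0 < (#|F'|%:R : R) by rewrite ltr0n.
have hinner : forall A, A \in F' ->
    ((2 ^ (s * m.-1))%:R / #|F'|%:R) / 2 <= (#|A|%:R)^-1 * \sum_(x in A) abundance R F' x
    <= m%:R^-1 + (((2 ^ s).+1 ^ m.-1 + k * m)%:R / #|F'|%:R).
  move=> A hAF; have [hA0 hAs] := hA A hAF.
  have hl0 : 0 <= ((2 ^ (s * m.-1))%:R / #|F'|%:R : R) by apply: divr_ge0; rewrite ler0n.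
  have hh0 : 0 <= ((((2 ^ s).+1 ^ m.-1 + k * m)%:R / #|F'|%:R) : R) by apply: divr_ge0; rewrite ler0n.
  apply: (inner_bounds Hm2 hA0 hAs hl0 hh0) => x xT; have [c1 c2] := hcnt x xT.
  rewrite /abundance; apply/andP; split.
    by rewrite ler_pM2r ?invr_gt0 // ler_nat.
  by rewrite ler_pM2r ?invr_gt0 // ler_nat.
have /andP[hlo hhi] := AOD_between hpos h0 hinner.
exact: (final_numeric hm hF1 hF2 hlo hhi).
Qed.
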